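(* For $k\in\mathbb{N}$ let $C(k)=\dfrac{2\,(4^{k}-3k-1)}{(2k+1)!}$. (i) For every $x\in(0,\pi/2)$ and every $n\in\mathbb{N}$, $$3+\frac{1}{\cos x}\sum_{k=2}^{2n+1}(-1)^{k}C(k)\,x^{2k}<2\,\frac{\sin x}{x}+\frac{\tan x}{x}<3+\frac{1}{\cos x}\sum_{k=2}^{2n}(-1)^{k}C(k)\,x^{2k}.$$ (ii) For every $x\in(0,\pi/2)$ and every integer $m\ge 2$, $$\Big|\,2\,\frac{\sin x}{x}+\frac{\tan x}{x}-\Big(3+\frac{1}{\cos x}\sum_{k=2}^{m}(-1)^{k}C(k)\,x^{2k}\Big)\Big|<C(m+1)\,\frac{x^{2m+2}}{\cos x}.$$
   Context: $\mathbb{N}=\{1,2,3,\dots\}$. *)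

(* Defs.v *)
From Stdlib Require Import Reals Lra Lia Arith Factorial.
Open Scope R_scope.

Definition Ccoef (k : nat) : R :=
  2 * (4 ^ k - 3 * INR k - 1) / INR (fact (2 * k + 1)).

Fixpoint psum (x : R) (N : nat) : R :=
  match N with
  | O => 0
  | S N' => psum x N' + (if (2 <=? N)%nat then (-1) ^ N * Ccoef N * x ^ (2 * N) else 0)
  end.

Definition approx (x : R) (N : nat) : R := 3 + / cos x * psum x N.

(* Main.v *)
Require Import Defs.
From Stdlib Require Import Reals Lra Lia Arith Factorial.
Open Scope R_scope.

Definition ww (x : R) (k : nat) : R := (-1) ^ k * Ccoef k * x ^ (2 * k).
Definition aa (x : R) (k : nat) : R := Ccoef k * x ^ (2 * k).

Lemma INR_fact_pos n : 0 < INR (fact n).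
Proof. apply lt_0_INR, lt_O_fact. Qed.

Lemma fact_2k1 k : INR (fact (2 * k + 1)) = (2 * INR k + 1) * INR (fact (2 * k)).
Proof.
  replace (2 * k + 1)%nat with (S (2 * k)) by lia.
  change (fact (S (2 * k))) with (S (2 * k) * fact (2 * k))%nat.
  rewrite mult_INR, S_INR, mult_INR. simpl. ring.
Qed.

Lemma term_id x k : x <> 0 ->
  ww x k = ((-1)^k / INR (fact (2 * k + 1)) * (2 * x) ^ (2 * k + 1)
          + (-1)^k / INR (fact (2 * k + 1)) * x ^ (2 * k + 1)
          - 3 * x * ((-1)^k / INR (fact (2 * k)) * x ^ (2 * k))) * / x.
Proof.
  intro hx. unfold ww, Ccoef.
  rewrite Rpow_mult_distr, !pow_add, (pow_mult 2 2 k), fact_2k1.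
  assert (H := INR_fact_pos (2*k)). assert (0 <= INR k) by apply pos_INR.
  replace (2^2) with 4 by ring. replace (x^1) with x by ring. replace (2^1) with 2 by ring. field. split; [lra|]. split; lra.
Qed.


Lemma Un_cv_ext (s t : nat -> R) l : (forall n, s n = t n) -> Un_cv s l -> Un_cv t l.
Proof.
  intros E H eps He. destruct (H eps He) as [N HN]. exists N. intros n Hn.
  rewrite <- E. auto.
Qed.

Lemma Un_cv_const c : Un_cv (fun _ => c) c.
Proof. intros eps He. exists 0%nat. intros. unfold R_dist. rewrite Rminus_diag, Rabs_R0. auto. Qed.

Lemma series_cv x : x <> 0 ->
  Un_cv (fun N => sum_f_R0 (ww x) N) ((sin (2 * x) + sin x - 3 * x * cos x) * / x).
Proof.
  intro hx.
  assert (H := CV_mult _ _ _ _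
    (CV_minus _ _ _ _ (CV_plus _ _ _ _ (B1_cvg (2 * x)) (B1_cvg x))
       (CV_mult _ _ _ _ (Un_cv_const (3 * x)) (A1_cvg x)))
    (Un_cv_const (/ x))).
  simpl in H. revert H. apply Un_cv_ext. intro N.
  unfold B1, A1. symmetry. induction N as [|N IH].
  - simpl. rewrite term_id by auto. reflexivity.
  - rewrite !tech5. rewrite IH, (term_id x (S N)) by auto. field. split; [auto|split; apply not_0_INR, fact_neq_0].
Qed.

Lemma Ccoef0 : Ccoef 0 = 0.
Proof. unfold Ccoef. simpl. field. Qed.
Lemma Ccoef1 : Ccoef 1 = 0.
Proof. unfold Ccoef. simpl. field. Qed.

Lemma psum_eq x N : psum x N = sum_f_R0 (ww x) N.
Proof.
  induction N as [|N IH].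
  - simpl. unfold ww. rewrite Ccoef0. ring.
  - rewrite tech5, <- IH. destruct N as [|N].
    + simpl. unfold ww. rewrite ?Ccoef0, ?Ccoef1. unfold Ccoef. simpl. field.
    + simpl (2 <=? S (S N))%nat. cbv iota. reflexivity.
Qed.

Lemma shift_sum x n :
  sum_f_R0 (tg_alt (fun n => aa x (n + 2))) n = sum_f_R0 (ww x) (n + 2).
Proof.
  induction n as [|n IH].
  - simpl. unfold tg_alt, ww, aa. rewrite Ccoef0, Ccoef1. simpl. ring.
  - rewrite tech5, IH. replace (S n + 2)%nat with (S (n + 2)) by lia.
    rewrite tech5. unfold tg_alt, ww, aa. f_equal.
    replace (S (n+2)) with (S n + 2)%nat by lia. rewrite pow_add. simpl. ring.
Qed.

Lemma four_pow j : 15 * INR (j + 2) + 2 <= 2 * 4 ^ (j + 2).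
Proof.
  induction j as [|j IH].
  - simpl. lra.
  - replace (S j + 2)%nat with (S (j + 2)) by lia. rewrite S_INR. simpl (4 ^ S _).
    assert (2 <= INR (j + 2)) by (rewrite plus_INR; simpl; assert (0 <= INR j) by apply pos_INR; lra). lra.
Qed.

Lemma fact_step k : INR (fact (2 * S k + 1)) = (2 * INR k + 3) * (2 * INR k + 2) * INR (fact (2 * k + 1)).
Proof.
  replace (2 * S k + 1)%nat with (S (S (2 * k + 1))) by lia.
  change (fact (S (S (2 * k + 1)))) with (S (S (2 * k + 1)) * (S (2 * k + 1) * fact (2 * k + 1)))%nat.
  rewrite !mult_INR, !S_INR, plus_INR, mult_INR. simpl. ring.
Qed.

Lemma aa_pos x j : 0 < x -> 0 < aa x (j + 2).
Proof.
  intro hx. unfold aa, Ccoef. assert (H := four_pow j).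
  assert (0 <= INR (j+2)) by apply pos_INR.
  assert (H1 := INR_fact_pos (2 * (j + 2) + 1)).
  assert (0 < x ^ (2 * (j + 2))) by (apply pow_lt; auto).
  apply Rmult_lt_0_compat; auto.
  apply Rdiv_lt_0_compat; auto. assert (2 <= INR (j + 2)) by (rewrite plus_INR; simpl; assert (0 <= INR j) by apply pos_INR; lra). lra.
Qed.

Lemma aa_ratio x j : 0 < x < 2 -> aa x (S (j + 2)) <= 4 / 7 * aa x (j + 2).
Proof.
  intros [hx hx2]. assert (H := four_pow j).
  set (k := (j + 2)%nat) in *.
  assert (HK : 2 <= INR k) by (unfold k; rewrite plus_INR; simpl; assert (0 <= INR j) by apply pos_INR; lra).
  assert (HF := INR_fact_pos (2 * k + 1)).
  assert (HX : 0 < x ^ (2 * k)) by (apply pow_lt; auto).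
  unfold aa, Ccoef. rewrite fact_step.
  replace (x ^ (2 * S k)) with (x ^ (2 * k) * x ^ 2) by (replace (2 * S k)%nat with (2 * k + 2)%nat by lia; symmetry; apply pow_add).
  rewrite S_INR. simpl (4 ^ S k).
  set (P := 4 ^ k) in *. set (K := INR k) in *. set (F := INR (fact (2 * k + 1))) in *.
  set (X := x ^ (2 * k)) in *.
  assert (E : 4 / 7 * (2 * (P - 3 * K - 1) / F * X) -
     2 * (4 * P - 3 * (K + 1) - 1) / ((2 * K + 3) * (2 * K + 2) * F) * (X * x ^ 2)
     = X / (7 * (2 * K + 3) * (2 * K + 2) * F) *
       (8 * (P - 3 * K - 1) * (2 * K + 3) * (2 * K + 2) - 14 * x ^ 2 * (4 * P - 3 * K - 4))).
  { field. lra. }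
  assert (D : 0 <= 8 * (P - 3 * K - 1) * (2 * K + 3) * (2 * K + 2) - 14 * x ^ 2 * (4 * P - 3 * K - 4)).
  { assert (Q : 4.5 * K <= P - 3 * K - 1) by lra.
    assert (x ^ 2 < 4) by (simpl; nra).
    assert (0 <= x ^ 2) by (simpl; nra).
    assert (42 <= (2 * K + 3) * (2 * K + 2)) by nra.
    assert (0 < 4 * P - 3 * K - 4) by lra.
    assert (14 * x ^ 2 * (4 * P - 3 * K - 4) <= 56 * (4 * P - 3 * K - 4)) by nra.
    assert (42 * (P - 3 * K - 1) <= (P - 3 * K - 1) * ((2 * K + 3) * (2 * K + 2))) by nra.
    nra. }
  assert (0 <= X / (7 * (2 * K + 3) * (2 * K + 2) * F)).
  { apply Rlt_le, Rdiv_lt_0_compat; auto. repeat apply Rmult_lt_0_compat; lra. }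
  assert (0 <= X / (7 * (2 * K + 3) * (2 * K + 2) * F) *
       (8 * (P - 3 * K - 1) * (2 * K + 3) * (2 * K + 2) - 14 * x ^ 2 * (4 * P - 3 * K - 4))) by (apply Rmult_le_pos; auto).
  lra.
Qed.

Lemma ww_even x i : ww x (2 * i) = aa x (2 * i).
Proof. unfold ww, aa. rewrite pow_1_even. ring. Qed.
Lemma ww_odd x i : ww x (S (2 * i)) = - aa x (S (2 * i)).
Proof. unfold ww, aa. rewrite pow_1_odd. ring. Qed.

Lemma aa_dec x n : 0 < x < 2 -> aa x (S (n + 2)) < aa x (n + 2).
Proof.
  intro h. assert (H1 := aa_ratio x n h). assert (H2 := aa_pos x n (proj1 h)). lra.
Qed.

Lemma U_cv x : 0 < x < 2 -> Un_cv (fun n => aa x (n + 2)) 0.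
Proof.
  intro h.
  assert (B : forall n, aa x (n + 2) <= (4/7) ^ n * aa x 2).
  { induction n as [|n IH]. simpl. lra.
    replace (S n + 2)%nat with (S (n + 2)) by lia.
    assert (H := aa_ratio x n h). simpl. lra. }
  intros eps He.
  assert (P2 := aa_pos x 0 (proj1 h)). simpl in P2.
  destruct (pow_lt_1_zero (4/7)) with (y := eps / aa x 2) as [N HN].
  { rewrite Rabs_right; lra. }
  { apply Rdiv_lt_0_compat; auto. }
  exists N. intros n Hn. unfold R_dist. rewrite Rminus_0_r.
  assert (P := aa_pos x n (proj1 h)). rewrite Rabs_right by lra.
  assert (Hn' := HN n Hn). rewrite Rabs_right in Hn' by (apply Rle_ge, pow_le; lra).
  apply Rle_lt_trans with ((4/7)^n * aa x 2); auto.
  apply Rmult_lt_compat_r with (r := aa x 2) in Hn'; auto.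
  unfold Rdiv in Hn'. rewrite Rmult_assoc, Rinv_l in Hn' by lra. lra.
Qed.

Lemma nonstrict x j : 0 < x < 2 ->
  let L := (sin (2 * x) + sin x - 3 * x * cos x) * / x in
  sum_f_R0 (ww x) (2 * j + 3) <= L <= sum_f_R0 (ww x) (2 * j + 2).
Proof.
  intros h L.
  assert (H := alternated_series_ineq (fun n => aa x (n + 2)) L j).
  rewrite !shift_sum in H.
  replace (S (2 * j) + 2)%nat with (2 * j + 3)%nat in H by lia.
  apply H.
  - intro n. replace (S n + 2)%nat with (S (n + 2)) by lia. left. apply aa_dec; auto.
  - apply U_cv; auto.
  - eapply Un_cv_ext. intro n. symmetry. apply shift_sum.
    assert (S := series_cv x ltac:(lra)). intros eps He. destruct (S eps He) as [N HN].
    exists N. intros n Hn. apply HN. lia.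
Qed.

Lemma strict x j : 0 < x < 2 ->
  let L := (sin (2 * x) + sin x - 3 * x * cos x) * / x in
  sum_f_R0 (ww x) (2 * j + 3) < L < sum_f_R0 (ww x) (2 * j + 2).
Proof.
  intros h L.
  assert (H := nonstrict x (S j) h). fold L in H.
  replace (2 * S j + 3)%nat with (S (S (2 * j + 3))) in H by lia.
  replace (2 * S j + 2)%nat with (S (S (2 * j + 2))) in H by lia.
  rewrite !tech5 in H.
  replace (S (2 * j + 2)) with (S (2 * (j + 1))) in H by lia.
  replace (S (S (2 * j + 2))) with (2 * (j + 2))%nat in H by lia.
  replace (S (2 * j + 3)) with (2 * (j + 2))%nat in H by lia.
  replace (S (S (2 * j + 3))) with (S (2 * (j + 2))) in H by lia.
  rewrite !ww_even, !ww_odd in H.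
  assert (D1 := aa_dec x (2 * j + 1) h).
  assert (D2 := aa_dec x (2 * j + 2) h).
  replace (S (2 * j + 1 + 2)) with (2 * (j + 2))%nat in D1 by lia.
  replace (2 * j + 1 + 2)%nat with (S (2 * (j + 1))) in D1 by lia.
  replace (S (2 * j + 2 + 2)) with (S (2 * (j + 2))) in D2 by lia.
  replace (2 * j + 2 + 2)%nat with (2 * (j + 2))%nat in D2 by lia.
  replace (S (S (2 * (j + 1)))) with (2 * (j + 2))%nat in H by lia. rewrite ww_even in H. cbv zeta in H. lra.
Qed.

Lemma key x N : 0 < x < PI / 2 ->
  2 * (sin x / x) + tan x / x - approx x N =
  ((sin (2 * x) + sin x - 3 * x * cos x) * / x - sum_f_R0 (ww x) N) * / cos x.
Proof.
  intro h. assert (0 < cos x) by (apply cos_gt_0; lra).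
  unfold approx, tan. rewrite psum_eq, sin_2a. field. lra.
Qed.

Lemma abs_main x m : 0 < x < PI / 2 -> (2 <= m)%nat ->
  Rabs ((sin (2 * x) + sin x - 3 * x * cos x) * / x - sum_f_R0 (ww x) m) < aa x (S m).
Proof.
  intros h hm. assert (PI4 := PI_4). assert (h2 : 0 < x < 2) by lra.
  destruct (Nat.Even_or_Odd m) as [[j Hj]|[j Hj]].
  - destruct j as [|j]; [lia|]. assert (Hm : m = (2 * j + 2)%nat) by lia. rewrite ?Hm; try subst m.
    assert (H := strict x j h2). cbv zeta in H.
    replace (2 * j + 3)%nat with (S (2 * j + 2)) in H by lia.
    rewrite tech5 in H. replace (S (2 * j + 2)) with (S (2 * (j + 1))) in * by lia.
    rewrite ww_odd in H. apply Rabs_def1; lra.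
  - destruct j as [|j]; [lia|]. assert (Hm : m = (2 * j + 3)%nat) by lia. rewrite ?Hm; try subst m.
    assert (H := strict x j h2). assert (H' := strict x (S j) h2). cbv zeta in H, H'.
    replace (2 * S j + 2)%nat with (S (2 * j + 3)) in H' by lia.
    rewrite tech5 in H'. replace (S (2 * j + 3)) with (2 * (j + 2))%nat in * by lia.
    rewrite ww_even in H'. apply Rabs_def1; lra.
Qed.

Theorem theorem3 :
  (forall (x : R) (n : nat), 0 < x < PI / 2 -> (1 <= n)%nat ->
     approx x (2 * n + 1) < 2 * (sin x / x) + tan x / x < approx x (2 * n))
  /\
  (forall (x : R) (m : nat), 0 < x < PI / 2 -> (2 <= m)%nat ->
     Rabs (2 * (sin x / x) + tan x / x - approx x m)
       < Ccoef (m + 1) * (x ^ (2 * m + 2) / cos x)).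
Proof.
  split.
  - intros x n h hn. assert (PI4 := PI_4). assert (h2 : 0 < x < 2) by lra.
    assert (C : 0 < / cos x) by (apply Rinv_0_lt_compat, cos_gt_0; lra).
    destruct n as [|n]; [lia|].
    assert (H := strict x n h2). cbv zeta in H.
    replace (2 * S n + 1)%nat with (2 * n + 3)%nat by lia.
    replace (2 * S n)%nat with (2 * n + 2)%nat by lia.
    assert (K1 := key x (2 * n + 3) h). assert (K2 := key x (2 * n + 2) h).
    set (L := (sin (2 * x) + sin x - 3 * x * cos x) * / x) in *.
    assert (0 < (L - sum_f_R0 (ww x) (2 * n + 3)) * / cos x) by (apply Rmult_lt_0_compat; lra).
    assert (0 < (sum_f_R0 (ww x) (2 * n + 2) - L) * / cos x) by (apply Rmult_lt_0_compat; lra).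
    split; nra.
  - intros x m h hm.
    assert (C : 0 < / cos x) by (apply Rinv_0_lt_compat, cos_gt_0; lra).
    rewrite key by auto. rewrite Rabs_mult, (Rabs_right (/ cos x)) by lra.
    replace (Ccoef (m + 1) * (x ^ (2 * m + 2) / cos x)) with (aa x (S m) * / cos x).
    + apply Rmult_lt_compat_r; auto. apply abs_main; auto.
    + unfold aa. replace (S m) with (m + 1)%nat by lia.
      replace (2 * (m + 1))%nat with (2 * m + 2)%nat by lia. unfold Rdiv. ring.
Qed.
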